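(* For every positive integer $t$ there exists an integer $K_t$ such that the following holds. Let $G$ be a group (not necessarily abelian, written additively), let $M$ be a multiset of size $m$ of non-identity elements of $G$, and let $S$ be a set of $k\ge K_t$ non-identity elements of $G$. Then, for every $t$-weak ordering $(y_1,\dots,y_m)$ of $M$, there exists an ordering $(y_{m+1},\dots,y_{m+k})$ of $S$ such that $(y_1,\dots,y_m,y_{m+1},\dots,y_{m+k})$ is a $t$-weak ordering of the multiset $M\cup S$.
   Context: $M\cup S$ is the multiset union (multiplicities added). Given a multiset $M$ of size $m$, a $t$-weak ordering of $M$ is a sequence $(y_1,\dots,y_m)$ in which each element of $M$ appears exactly as many times as its multiplicity, such that the partial sums $s_0=0$, $s_i=y_1+\dots+y_i$ (summed left to right) satisfy $s_i\ne s_j$ whenever $0\le i<j\le m$ and $j-i\le t$. *)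

(* Defs.v *)
From HB Require Import structures.
From mathcomp Require Import all_boot.
Set Implicit Arguments. Unset Strict Implicit. Unset Printing Implicit Defensive.

Local Open Scope group_scope.

(* The paper writes the group additively; mathcomp's (possibly infinite,
   non-commutative) [groupType] is written multiplicatively, so "sum" is
   the group product and 0 is the identity 1. *)

Definition partial_sum (G : groupType) (ys : seq G) (i : nat) : G :=
  foldl (fun a b => a * b) 1 (take i ys).

Definition t_weak (G : groupType) (t : nat) (ys : seq G) : Prop :=
  forall i j : nat, i < j -> j <= size ys -> j - i <= t ->
    partial_sum ys i != partial_sum ys j.

(* Main.v *)
Require Import Defs.
From HB Require Import structures.
From mathcomp Require Import all_boot.
From mathcomp Require Import zify.

Set Implicit Arguments. Unset Strict Implicit. Unset Printing Implicit Defensive.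
Local Open Scope group_scope.

Section Main.
Variable G : groupType.
Variable t : nat.
Implicit Types (s u v L R B : seq G) (x y : G).

Definition prodg (s : seq G) : G := foldl (fun a b => a * b) 1 s.

Lemma foldl_mulE a s : foldl (fun a b => a * b) a s = a * prodg s.
Proof.
elim: s a => [|x s IH] a /=; first by rewrite /prodg /= mulg1.
by rewrite /prodg /= IH (IH (1 * x)) mul1g mulgA.
Qed.

Lemma prodg_cat s u : prodg (s ++ u) = prodg s * prodg u.
Proof. by rewrite /prodg foldl_cat foldl_mulE. Qed.

Lemma prodg_cons x s : prodg (x :: s) = x * prodg s.
Proof. by rewrite -cat1s prodg_cat /prodg /= mul1g. Qed.

Lemma prodg_nil : prodg [::] = 1.
Proof. by []. Qed.

Definition good (s : seq G) : Prop :=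
  forall u v w, s = u ++ v ++ w -> 0 < size v <= t -> prodg v != 1.

Lemma good_infix u s w : good (u ++ s ++ w) -> good s.
Proof.
move=> H a v b E Hv; apply: (H (u ++ a) v (b ++ w)) => //.
by rewrite E -!catA.
Qed.

Lemma good_prefix s w : good (s ++ w) -> good s.
Proof. by move=> H; apply: (@good_infix [::] s w). Qed.

Lemma good_suffix u s : good (u ++ s) -> good s.
Proof. by move=> H; apply: (@good_infix u s [::]); rewrite cats0. Qed.

Lemma cat_split3 (P Q u v w : seq G) : P ++ Q = u ++ v ++ w ->
  (exists w', P = u ++ v ++ w') \/ (exists u', Q = u' ++ v ++ w) \/
  (exists a b, [/\ v = a ++ b, P = u ++ a & Q = b ++ w]).
Proof.
elim: P u v w => [|x P IH] u v w /= E.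
  by right; left; exists u.
case: u E => [|y u] /= E.
  case: v E => [|z v] /= E.
    by left; exists (x :: P).
  case: E => <- E.
  have [[w' Ew]|[[u' Eu]|[a [b [Ev Ea Eb]]]]] := IH [::] v w E.
  - by left; exists w'; rewrite Ew.
  - have Hs := congr1 size E; rewrite Eu !size_cat /= in Hs.
    have u0 : u' = [::] by apply: size0nil; lia.
    have P0 : P = [::] by apply: size0nil; lia.
    subst u' P; right; right; exists [:: x], v; split => //.
  - right; right; exists (x :: a), b; split => //=; by rewrite ?Ev ?Ea.
case: E => <- E.
have [[w' Ew]|[[u' Eu]|[a [b [Ev Ea Eb]]]]] := IH u v w E.
- by left; exists w'; rewrite Ew.
- by right; left; exists u'.
- by right; right; exists a, b; rewrite Ea.
Qed.


Lemma suffix_of A B u a : A ++ B = u ++ a -> size a <= size B ->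
  exists B0, B = B0 ++ a.
Proof.
move=> E Ha.
have := @cat_split3 A B u a [::]; rewrite cats0 => /(_ E).
case=> [[w' Ew]|[[u' Eu]|[a1 [b1 [Ev Ea Eb]]]]].
- have Hs := congr1 size E; rewrite Ew !size_cat in Hs.
  have B0 : B = [::] by apply: size0nil; lia.
  have a0 : a = [::] by apply: size0nil; lia.
  by exists [::]; rewrite B0 a0.
- by exists u'.
- have Hs := congr1 size Ev; rewrite size_cat in Hs.
  have HsB := congr1 size Eb; rewrite cats0 in HsB.
  have a0 : a1 = [::] by apply: size0nil; lia.
  by exists [::]; rewrite Eb Ev a0 cats0.
Qed.

Lemma good_glue A B C : t.-1 <= size B -> good (A ++ B) -> good (B ++ C) ->
  good (A ++ B ++ C).
Proof.
move=> HB HAB HBC u v w E Hv.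
rewrite catA in E.
have [[w' Ew]|[[u' Eu]|[a [b [Ev Ea Eb]]]]] := cat_split3 E.
- exact: (HAB u v w').
- by apply: (HBC (B ++ u') v w) => //; rewrite Eu catA.
- case: b Ev Eb => [|z b] Ev Eb.
    by apply: (HAB u v [::]) => //; rewrite Ev !cats0.
  have Hsv : size v = size a + (size b).+1 by rewrite Ev size_cat.
  have [B0 EB] : exists B0, B = B0 ++ a.
    by apply: (suffix_of Ea); lia.
  by apply: (HBC B0 v w) => //; rewrite Eb EB Ev -!catA.
Qed.

Definition forb B : seq G :=
  [seq (prodg (drop i B))^-1 | i <- iota (size B - t.-1) t].

Lemma size_forb B : size (forb B) = t.
Proof. by rewrite size_map size_iota. Qed.

Lemma eq1_solve (a x : G) : a * x = 1 -> x = a^-1.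
Proof. by move=> E; rewrite -[x](mulKg a) E mulg1. Qed.

Lemma good_rcons B x : good B -> x != 1 -> x \notin forb B -> good (rcons B x).
Proof.
move=> HB Hx Hf u v w; rewrite -cats1 => E Hv.
have [[w' Ew]|[[u' Eu]|[a [b [Ev Ea Eb]]]]] := cat_split3 E.
- exact: (HB u v w').
- have Hs := congr1 size Eu; rewrite !size_cat /= in Hs.
  have u0 : u' = [::] by apply: size0nil; lia.
  have w0 : w = [::] by apply: size0nil; lia.
  subst u' w; rewrite cats0 /= in Eu; case: Eu => <-.
  by rewrite prodg_cons prodg_nil mulg1.
- case: b Ev Eb => [|z b] Ev Eb.
    by apply: (HB u v [::]) => //; rewrite Ev !cats0.
  case: Eb => Ezx Ebw.
  have b0 : b = [::] by apply: size0nil; have := congr1 size Ebw; rewrite size_cat /=; lia.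
  subst z b.
  rewrite Ev prodg_cat prodg_cons prodg_nil mulg1; apply/negP => /eqP /eq1_solve Ex.
  move/negP: Hf; apply; apply/mapP; exists (size u) => //.
    have Hs := congr1 size Ea; rewrite size_cat in Hs.
    have Hsv : size v = size a + 1 by rewrite Ev size_cat.
    rewrite mem_iota; lia.
  by rewrite Ex Ea drop_size_cat.
Qed.

Definition Bad L R : seq G :=
  [seq (prodg (drop i L))^-1 * (prodg (take j R))^-1 |
     i <- iota 0 (size L).+1, j <- iota 0 (size R).+1].

Lemma size_Bad L R : size (Bad L R) = ((size L).+1 * (size R).+1)%N.
Proof. by rewrite size_allpairs !size_iota. Qed.

Lemma eq1_solve3 (a x b : G) : a * (x * b) = 1 -> x = a^-1 * b^-1.
Proof.
move=> /eq1_solve E; by rewrite -E mulgK.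
Qed.

Lemma good_ins L R x : good L -> good R -> x != 1 -> x \notin Bad L R ->
  good (L ++ x :: R).
Proof.
move=> HL HR Hx Hb u v w E Hv.
have [[w' Ew]|[[u' Eu]|[a [b [Ev Ea Eb]]]]] := cat_split3 E.
- exact: (HL u v w').
- clear E; case: u' Eu => [|z u'] /= Eu.
    case: v Eu Hv => [|z v] //= [<- ER] Hv.
    rewrite prodg_cons; apply/negP => /eqP Ex1.
    have Ex : x = 1^-1 * (prodg v)^-1 by apply: eq1_solve3; rewrite mul1g.
    move/negP: Hb; apply; apply/allpairsP; exists (size L, size v).
    split; [rewrite mem_iota /=; lia | rewrite mem_iota ER size_cat /=; lia | rewrite /=].
    by rewrite Ex drop_size prodg_nil ER take_size_cat.
  case: Eu => _ ER; exact: (HR u' v w).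
- case: b Ev Eb => [|z b] Ev Eb.
    by apply: (HL u v [::]) => //; rewrite Ev !cats0.
  case: Eb => Ezx ER; subst z.
  rewrite Ev prodg_cat prodg_cons; apply/negP => /eqP /eq1_solve3 Ex.
  move/negP: Hb; apply; apply/allpairsP; exists (size u, size b).
  have Hs := congr1 size Ea; rewrite size_cat in Hs.
  split; [rewrite mem_iota /=; lia | rewrite mem_iota ER size_cat /=; lia | rewrite /=].
  by rewrite Ex Ea drop_size_cat // ER take_size_cat.
Qed.


Lemma pick (pool E : seq G) : uniq pool -> size E < size pool ->
  exists2 w, w \in pool & w \notin E.
Proof.
move=> Hu Hs.
case: (boolP (has (fun z => z \notin E) pool)) => [/hasP [w Hw HE]|Hn].
  by exists w.
have : size pool <= size E.
  apply: uniq_leq_size => // w Hw; move/hasPn: Hn => /(_ w Hw); exact: negbNE.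
lia.
Qed.

Definition inv (Bp : seq G) L R := forall y, y \in Bp -> y != 1 -> y \notin Bad L R.

Lemma prodg_rcons s x : prodg (rcons s x) = prodg s * x.
Proof. by rewrite -cats1 prodg_cat prodg_cons prodg_nil mulg1. Qed.

Lemma solveL (a y w : G) : y = (a * w)^-1 -> w = a^-1 * y^-1.
Proof. by move->; rewrite invgK mulKg. Qed.

Lemma solveR (a y r w : G) : y = a^-1 * (r * w)^-1 -> w = (a * y * r)^-1.
Proof. by move->; rewrite mulVKg invgM invgK mulKg. Qed.

Lemma rem_props (pool : seq G) w : w \in pool -> uniq pool ->
  all (fun x => x != 1) pool ->
  [/\ uniq (rem w pool), all (fun x => x != 1) (rem w pool),
      size (rem w pool) = (size pool).-1 & perm_eq pool (w :: rem w pool)].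
Proof.
move=> Hw Hu Hnz; split.
- exact: rem_uniq.
- by apply/allP => x Hx; apply: (allP Hnz); exact: mem_rem Hx.
- exact: size_rem.
- exact: perm_to_rem.
Qed.

Lemma Lphase (Bp : seq G) n : forall B L pool,
  good (B ++ L) -> uniq pool -> all (fun x => x != 1) pool ->
  (n + size L <= t.-1)%N -> (n + t + t * size Bp <= size pool)%N ->
  inv Bp L [::] ->
  exists L' pool', [/\ size L' = n, perm_eq pool (L' ++ pool'),
     good (B ++ L ++ L') & inv Bp (L ++ L') [::]].
Proof.
elim: n => [|n IH] B L pool HB Hu Hnz HsL Hsp Hinv.
  by exists [::], pool; rewrite !cats0.
set E := [seq (prodg (drop i L))^-1 * y^-1 | i <- iota 0 (size L).+1, y <- Bp].
have [w Hw HwE] : exists2 w, w \in pool & w \notin forb (B ++ L) ++ E.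
  apply: pick => //; rewrite size_cat size_forb size_allpairs size_iota.
  have : ((size L).+1 * size Bp <= t * size Bp)%N by apply: leq_mul => //; lia.
  move: Hsp; set p := ((size L).+1 * size Bp)%N; set q := (t * size Bp)%N; set sp := size pool; lia.
rewrite mem_cat negb_or in HwE; case/andP: HwE => Hwf HwE.
have Hw1 : w != 1 := allP Hnz w Hw.
have HB' : good (B ++ rcons L w) by rewrite -rcons_cat; apply: good_rcons.
have Hinv' : inv Bp (rcons L w) [::].
  move=> y Hy Hy1; apply/negP => /allpairsP [[i j] [Hi Hj Ey]].
  move: Hi; rewrite mem_iota size_rcons /= => Hi; simpl in Ey.
  have [Hi'|Hi'] : (i <= size L)%N \/ i = (size L).+1 by lia.
  - rewrite drop_rcons // /= prodg_nil invg1 mulg1 prodg_rcons in Ey.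
    move/negP: HwE; apply; rewrite (solveL Ey); apply: allpairs_f => //.
    by rewrite mem_iota; lia.
  - rewrite Hi' drop_oversize ?size_rcons // /= prodg_nil invg1 mulg1 in Ey.
    by rewrite Ey eqxx in Hy1.
have [Hu' Hnz' Hs' Hp'] := rem_props Hw Hu Hnz.
have H1 : (n + size (rcons L w) <= t.-1)%N by rewrite size_rcons; lia.
have H2 : (n + t + t * size Bp <= size (rem w pool))%N.
  by rewrite Hs'; move: Hsp; set q := (t * size Bp)%N; set sp := size pool; lia.
have [L' [pool' [HsL' Hp HgL HiL]]] := IH B (rcons L w) (rem w pool) HB' Hu' Hnz' H1 H2 Hinv'.
exists (w :: L'), pool'; split => //=.
- by rewrite HsL'.
- by apply: (perm_trans Hp'); rewrite perm_cons.
- by move: HgL; rewrite -cats1 -!catA.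
- by move: HiL; rewrite -cats1 -!catA.
Qed.


Lemma Rphase (Bp : seq G) L n : forall B R pool,
  good (B ++ L ++ R) -> uniq pool -> all (fun x => x != 1) pool ->
  (size L < t)%N -> (n + t + t * size Bp <= size pool)%N ->
  inv Bp L R ->
  exists R' pool', [/\ size R' = n, perm_eq pool (R' ++ pool'),
     good (B ++ L ++ R ++ R') & inv Bp L (R ++ R')].
Proof.
elim: n => [|n IH] B R pool HB Hu Hnz HsL Hsp Hinv.
  by exists [::], pool; rewrite !cats0.
set E := [seq (prodg (drop i L) * y * prodg R)^-1 | i <- iota 0 (size L).+1, y <- Bp].
have [w Hw HwE] : exists2 w, w \in pool & w \notin forb (B ++ L ++ R) ++ E.
  apply: pick => //; rewrite size_cat size_forb size_allpairs size_iota.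
  have : ((size L).+1 * size Bp <= t * size Bp)%N by apply: leq_mul => //; lia.
  move: Hsp; set p := ((size L).+1 * size Bp)%N; set q := (t * size Bp)%N; set sp := size pool; lia.
rewrite mem_cat negb_or in HwE; case/andP: HwE => Hwf HwE.
have Hw1 : w != 1 := allP Hnz w Hw.
have HB' : good (B ++ L ++ rcons R w) by rewrite -!rcons_cat; apply: good_rcons.
have Hinv' : inv Bp L (rcons R w).
  move=> y Hy Hy1; apply/negP => /allpairsP [[i j] [Hi Hj Ey]].
  move: Hj; rewrite mem_iota size_rcons /= => Hj; simpl in Ey.
  have [Hj'|Hj'] : (j <= size R)%N \/ j = (size R).+1 by lia.
  - rewrite -cats1 takel_cat // in Ey.
    move/negP: (Hinv y Hy Hy1); apply; rewrite Ey; apply/allpairsP; exists (i, j); split; [exact: Hi | rewrite mem_iota /=; lia | by []].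
  - rewrite Hj' take_oversize ?size_rcons // prodg_rcons in Ey.
    move/negP: HwE; apply; rewrite (solveR Ey); apply: allpairs_f => //.
have [Hu' Hnz' Hs' Hp'] := rem_props Hw Hu Hnz.
have H2 : (n + t + t * size Bp <= size (rem w pool))%N.
  by rewrite Hs'; move: Hsp; set q := (t * size Bp)%N; set sp := size pool; lia.
have [R' [pool' [HsR' Hp HgR HiR]]] := IH B (rcons R w) (rem w pool) HB' Hu' Hnz' HsL H2 Hinv'.
exists (w :: R'), pool'; split => //=.
- by rewrite HsR'.
- by apply: (perm_trans Hp'); rewrite perm_cons.
- by move: HgR; rewrite -cats1 -!catA.
- by move: HiR; rewrite -cats1 -!catA.
Qed.

Lemma inv_nil Bp : inv Bp [::] [::].
Proof.
move=> y _ Hy1; rewrite /Bad /= prodg_nil invg1 mulg1 inE.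
exact: Hy1.
Qed.

Lemma chunk (Bp : seq G) B pool : good B -> uniq pool -> all (fun x => x != 1) pool ->
  (0 < t)%N -> (t.-1 + t.-1 + t + t * size Bp <= size pool)%N ->
  exists L R pool', [/\ size L = t.-1, size R = t.-1, perm_eq pool (L ++ R ++ pool'),
     good (B ++ L ++ R) & inv Bp L R].
Proof.
move=> HB Hu Hnz Ht Hsp.
have HB0 : good (B ++ [::]) by rewrite cats0.
have H1 : (t.-1 + size ([::] : seq G) <= t.-1)%N by rewrite addn0.
have H2 : (t.-1 + t + t * size Bp <= size pool)%N.
  by move: Hsp; set q := (t * size Bp)%N; set sp := size pool; lia.
have [L [pool1 [HsL Hp1 HgL HiL]]] := Lphase HB0 Hu Hnz H1 H2 (@inv_nil Bp).
rewrite /= in HgL HiL.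
have Hu1 : uniq pool1 by move: Hu; rewrite (perm_uniq Hp1) cat_uniq => /and3P [].
have Hnz1 : all (fun x => x != 1) pool1.
  by move: Hnz; rewrite (perm_all _ Hp1) all_cat => /andP [].
have HgL0 : good (B ++ L ++ [::]) by rewrite cats0.
have HsL' : (size L < t)%N by rewrite HsL; lia.
have H3 : (t.-1 + t + t * size Bp <= size pool1)%N.
  have := perm_size Hp1; rewrite size_cat HsL => Hs.
  by move: Hsp Hs; set q := (t * size Bp)%N; set sp := size pool; set sp1 := size pool1; lia.
have [R [pool2 [HsR Hp2 HgR HiR]]] := Rphase HgL0 Hu1 Hnz1 HsL' H3 HiL.
exists L, R, pool2; split => //.
apply: (perm_trans Hp1); by rewrite perm_cat2l.
Qed.


Definition BadC (c : seq G * seq G) := Bad c.1 c.2.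

Fixpoint disj (rcs : seq (seq G * seq G)) : Prop :=
  if rcs is c :: r then disj r /\ inv (flatten (map BadC r)) c.1 c.2 else True.

Definition flat (cs : seq (seq G * seq G)) := flatten [seq c.1 ++ c.2 | c <- cs].

Definition okC (c : seq G * seq G) :=
  [/\ size c.1 = t.-1, size c.2 = t.-1 & good (c.1 ++ c.2)].

Lemma flat_rev_cons c rcs : flat (rev (c :: rcs)) = flat (rev rcs) ++ (c.1 ++ c.2).
Proof. by rewrite rev_cons /flat map_rcons flatten_rcons. Qed.

Lemma size_BadF rcs : (0 < t)%N -> (forall c, c \in rcs -> okC c) ->
  size (flatten (map BadC rcs)) = (t * t * size rcs)%N.
Proof.
move=> Ht; elim: rcs => [|c r IH] Hok; first by rewrite /= muln0.
have -> : flatten (map BadC (c :: r)) = BadC c ++ flatten (map BadC r) by [].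
rewrite size_cat IH; last by move=> c' Hc'; apply: Hok; rewrite inE Hc' orbT.
have [H1 H2 _] := Hok c (mem_head _ _).
rewrite /BadC size_Bad H1 H2 prednK //=.
by rewrite mulnS addnC.
Qed.

Lemma chunks (B0 : seq G) k : (0 < t)%N -> forall rcs pool,
  good (B0 ++ flat (rev rcs)) -> uniq pool -> all (fun x => x != 1) pool ->
  (forall c, c \in rcs -> okC c) -> disj rcs ->
  (k * (3 * t) + t * (t * t * (size rcs + k)) <= size pool)%N ->
  exists rcs2 pool2, [/\ size rcs2 = (k + size rcs)%N,
    perm_eq (flat (rev rcs) ++ pool) (flat (rev rcs2) ++ pool2),
    good (B0 ++ flat (rev rcs2)), (forall c, c \in rcs2 -> okC c) & disj rcs2].
Proof.
move=> Ht; elim: k => [|k IH] rcs pool HB Hu Hnz Hok Hd Hsp.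
  by exists rcs, pool; split.
set Bp := flatten (map BadC rcs).
have HsBp : size Bp = (t * t * size rcs)%N by apply: size_BadF.
have Hle1 : (t * (t * t * size rcs) <= t * (t * t * (size rcs + k.+1)))%N.
  by apply: leq_mul => //; apply: leq_mul => //; lia.
have Hsp' : (t.-1 + t.-1 + t + t * size Bp <= size pool)%N.
  rewrite HsBp; move: Hsp Hle1; rewrite mulSn.
  set a := (k * (3 * t))%N; set b := (t * (t * t * size rcs))%N.
  set c := (t * (t * t * (size rcs + k.+1)))%N; set sp := size pool; lia.
have [L [R [pool1 [HsL HsR Hp1 HgLR Hinv]]]] := chunk HB Hu Hnz Ht Hsp'.
have Hu1 : uniq pool1 by move: Hu; rewrite (perm_uniq Hp1) !cat_uniq => /and3P [_ _] /and3P [].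
have Hnz1 : all (fun x => x != 1) pool1.
  by move: Hnz; rewrite (perm_all _ Hp1) !all_cat => /and3P [].
set rcs' := (L, R) :: rcs.
have HB' : good (B0 ++ flat (rev rcs')) by rewrite flat_rev_cons /= catA.
have Hok' : forall c, c \in rcs' -> okC c.
  move=> c; rewrite inE => /orP [/eqP ->|Hc]; last exact: Hok.
  by split => //=; exact: (good_suffix HgLR).
have Hd' : disj rcs' by [].
have Hsp1 : (k * (3 * t) + t * (t * t * (size rcs' + k)) <= size pool1)%N.
  have := perm_size Hp1; rewrite !size_cat HsL HsR => Hs.
  have -> : (size rcs' + k = size rcs + k.+1)%N by rewrite /= addSnnS.
  move: Hsp Hs; rewrite mulSn.
  set a := (k * (3 * t))%N; set c := (t * (t * t * (size rcs + k.+1)))%N.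
  set sp := size pool; set sp1 := size pool1; lia.
have [rcs2 [pool2 [Hs2 Hp2 Hg2 Hok2 Hd2]]] := IH rcs' pool1 HB' Hu1 Hnz1 Hok' Hd' Hsp1.
exists rcs2, pool2; split => //.
- by rewrite Hs2 /= addSnnS.
- apply: (perm_trans _ Hp2); rewrite flat_rev_cons -catA perm_cat2l.
  by rewrite /= -catA.
Qed.


Lemma Dphase n : forall B pool, good B -> uniq pool -> all (fun x => x != 1) pool ->
  (size pool <= n + t)%N ->
  exists D Q, [/\ perm_eq pool (D ++ Q), (size Q <= t)%N & good (B ++ D)].
Proof.
elim: n => [|n IH] B pool HB Hu Hnz Hs.
  by exists [::], pool; rewrite cats0.
case: (leqP (size pool) t) => Hst.
  by exists [::], pool; rewrite cats0.
have [w Hw Hwf] : exists2 w, w \in pool & w \notin forb B.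
  by apply: pick => //; rewrite size_forb.
have Hw1 : w != 1 := allP Hnz w Hw.
have HB' := good_rcons HB Hw1 Hwf.
have [Hu' Hnz' Hs' Hp'] := rem_props Hw Hu Hnz.
have Hs1 : (size (rem w pool) <= n + t)%N by rewrite Hs'; move: Hs; set sp := size pool; lia.
have [D [Q [Hp Hq Hg]]] := IH _ _ HB' Hu' Hnz' Hs1.
exists (w :: D), Q; split => //.
- by apply: (perm_trans Hp'); rewrite perm_cons.
- by move: Hg; rewrite -cats1 -catA.
Qed.

Definition okT (c : (seq G * seq G) * seq G) :=
  c.2 = [::] \/ exists x, c.2 = [:: x] /\ x != 1 /\ x \notin BadC c.1.

Lemma assignA rcs : forall Q, (size Q <= size rcs)%N -> all (fun x => x != 1) Q ->
  (forall x, x \in Q -> forall c, c \in rcs -> x \notin BadC c) ->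
  exists tr, [/\ map fst tr = rcs, perm_eq (flatten (map snd tr)) Q &
     forall c, c \in tr -> okT c].
Proof.
elim: rcs => [|c r IH] Q HsQ Hnz HQ.
  case: Q HsQ {Hnz HQ} => // _; by exists [::].
case: Q HsQ Hnz HQ => [|x Q] HsQ Hnz HQ.
  have [tr [Hm Hp Hok]] : exists tr, [/\ map fst tr = r, perm_eq (flatten (map snd tr)) [::] &
     forall c, c \in tr -> okT c] by apply: IH => //.
  exists ((c, [::]) :: tr); split => /=; [by rewrite Hm | by [] |].
  by move=> c'; rewrite inE => /orP [/eqP -> |]; [left | exact: Hok].
move: Hnz => /= /andP [Hx Hnz].
have HQ' : forall y, y \in Q -> forall c', c' \in r -> y \notin BadC c'.
  by move=> y Hy c' Hc'; apply: HQ; rewrite inE ?Hy ?Hc' orbT.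
have [tr [Hm Hp Hok]] := IH Q HsQ Hnz HQ'.
exists ((c, [:: x]) :: tr); split => /=; [by rewrite Hm | by rewrite perm_cons |].
move=> c'; rewrite inE => /orP [/eqP -> |]; last exact: Hok.
right; exists x; split => //; split => //.
by apply: HQ; rewrite inE eqxx.
Qed.

Lemma assignB rcs : forall Q, disj rcs -> (size Q < size rcs)%N -> all (fun x => x != 1) Q ->
  exists tr, [/\ map fst tr = rcs, perm_eq (flatten (map snd tr)) Q &
     forall c, c \in tr -> okT c].
Proof.
elim: rcs => [|c r IH] Q Hd HsQ Hnz //.
case: Hd => Hd Hinv.
case: (boolP (has (fun x => x \notin BadC c) Q)) => [/hasP [x Hx HxB]|Hn].
  have Hx1 : x != 1 := allP Hnz x Hx.
  have HQ0 : (0 < size Q)%N by case: (Q) Hx.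
  have HsQ' : (size (rem x Q) < size r)%N.
    by rewrite size_rem //; move: HsQ HQ0 => /=; set sq := size Q; lia.
  have Hnz' : all (fun x => x != 1) (rem x Q).
    by apply/allP => y Hy; apply: (allP Hnz); exact: mem_rem Hy.
  have [tr [Hm Hp Hok]] := IH _ Hd HsQ' Hnz'.
  exists ((c, [:: x]) :: tr); split => /=; [by rewrite Hm | |].
    apply: (@perm_trans _ (x :: rem x Q)); first by rewrite /= perm_cons.
    by rewrite perm_sym perm_to_rem.
  move=> c'; rewrite inE => /orP [/eqP -> |]; last exact: Hok.
  by right; exists x.
have HQ : forall x, x \in Q -> forall c', c' \in r -> x \notin BadC c'.
  move=> x Hx c' Hc'; apply/negP => HxB.
  have Hx1 : x != 1 := allP Hnz x Hx.
  have Hin : x \in flatten (map BadC r) by apply/flatten_mapP; exists c'.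
  move/hasPn: Hn => /(_ x Hx); rewrite negbK => HxC.
  by move/negP: (Hinv x Hin Hx1).
have HsQ' : (size Q <= size r)%N by move: HsQ => /=; set sq := size Q; lia.
have [tr [Hm Hp Hok]] := @assignA r Q HsQ' Hnz HQ.
exists ((c, [::]) :: tr); split => /=; [by rewrite Hm | by [] |].
by move=> c'; rewrite inE => /orP [/eqP -> |]; [left | exact: Hok].
Qed.


Definition baseT (c : (seq G * seq G) * seq G) := c.1.1 ++ c.1.2.
Definition finT (c : (seq G * seq G) * seq G) := c.1.1 ++ c.2 ++ c.1.2.

Lemma glue_chunks tr : forall X Y, (forall Z, good (X ++ Z) -> good (Y ++ Z)) ->
  (forall c, c \in tr ->
     [/\ (t.-1 <= size c.1.1)%N, (t.-1 <= size c.1.2)%N & (c.2 = [::] \/ good (finT c))]) ->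
  forall Z, good (X ++ flatten (map baseT tr) ++ Z) -> good (Y ++ flatten (map finT tr) ++ Z).
Proof.
elim: tr => [|c tr IH] X Y H Hc Z /=; first exact: H.
have [HL HR Hg] := Hc c (mem_head _ _).
have Hc' : forall c', c' \in tr ->
   [/\ (t.-1 <= size c'.1.1)%N, (t.-1 <= size c'.1.2)%N & (c'.2 = [::] \/ good (finT c'))].
  by move=> c' Hc'; apply: Hc; rewrite inE Hc' orbT.
have H' : forall Z', good ((X ++ baseT c) ++ Z') -> good ((Y ++ finT c) ++ Z').
  move=> Z' HZ.
  rewrite /baseT -!catA in HZ.
  have HXL : good (X ++ c.1.1).
    by apply: (@good_prefix _ (c.1.2 ++ Z')); rewrite -catA.
  have HYL := H _ HXL.
  have HLIR : good (c.1.1 ++ c.2 ++ c.1.2).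
    case: Hg => [->|]; last by [].
    apply: (@good_prefix _ Z'); rewrite /= -catA; apply: (@good_suffix X).
    exact: HZ.
  have HY1 : good (Y ++ c.1.1 ++ c.2 ++ c.1.2) by apply: good_glue.
  have HRZ : good (c.1.2 ++ Z').
    by apply: (@good_suffix (X ++ c.1.1)); rewrite -!catA.
  rewrite /finT -!catA.
  have := @good_glue (Y ++ c.1.1 ++ c.2) c.1.2 Z' HR; rewrite -!catA; apply => //.
have := IH (X ++ baseT c) (Y ++ finT c) H' Hc' Z.
by rewrite -!catA.
Qed.

Lemma ps_split s i j : (i <= j)%N ->
  partial_sum s j = partial_sum s i * prodg (take (j - i) (drop i s)).
Proof.
move=> Hij; rewrite /partial_sum -[j](subnKC Hij) takeD.
by rewrite -/(prodg _) prodg_cat subnKC.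
Qed.

Lemma tweak_good s : t_weak t s -> good s.
Proof.
move=> Ht u v w E Hv; have := Ht (size u) (size u + size v)%N.
have Hs : size s = (size u + size v + size w)%N by rewrite E !size_cat addnA.
have Hle : (size u <= size u + size v)%N by lia.
rewrite (ps_split s Hle) addKn E drop_size_cat // take_size_cat //.
move=> H; apply/negP => /eqP Hv1; move: H; rewrite Hv1 mulg1 eqxx.
have H1 : (size u < size u + size v)%N by lia.
have H2 : (size u + size v <= size (u ++ v ++ w))%N by rewrite !size_cat; lia.
have H3 : (size u + size v - size u <= t)%N by lia.
by rewrite addKn in H3; move/(_ H1 H2 H3).
Qed.

Lemma good_tweak s : good s -> t_weak t s.
Proof.
move=> Hg i j Hij Hj Hji; rewrite (ps_split s (ltnW Hij)).
apply/negP => /eqP E.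
have E1 : prodg (take (j - i) (drop i s)) = 1.
  by rewrite -[LHS](mulKg (partial_sum s i)) -E mulVg.
have Hdec : s = take i s ++ take (j - i) (drop i s) ++ drop (j - i) (drop i s).
  by rewrite !cat_take_drop.
have Hsz : (0 < size (take (j - i) (drop i s)) <= t)%N.
  rewrite size_take size_drop; move: Hj Hij Hji; set ss := size s; case: ifP; lia.
by move: (Hg _ _ _ Hdec Hsz); rewrite E1 eqxx.
Qed.


Lemma perm_finT (l : seq ((seq G * seq G) * seq G)) :
  perm_eq (flatten (map finT l)) (flatten (map baseT l) ++ flatten (map snd l)).
Proof.
elim: l => [|c l IH] //=.
rewrite /finT /baseT -!catA perm_cat2l perm_catCA perm_cat2l.
apply: (@perm_trans _ (c.2 ++ (flatten (map baseT l) ++ flatten (map snd l)))).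
  by rewrite perm_cat2l; exact: IH.
by rewrite perm_catCA.
Qed.

End Main.

Theorem proposition2p4 :
  forall t : nat, (0 < t)%N ->
  exists K : nat,
    forall (G : groupType) (M S ys : seq G),
      all (fun x => x != 1) M ->
      uniq S -> all (fun x => x != 1) S -> (K <= size S)%N ->
      perm_eq ys M -> t_weak t ys ->
      exists zs : seq G, perm_eq zs S /\ t_weak t (ys ++ zs).
Proof.
move=> t Ht.
exists (t.+1 * (3 * t) + t * (t * t * t.+1))%N.
move=> G M S ys HM HuS HnzS HK Hperm Hys.
have Hg0 : good t (ys ++ flat (rev [::])) by rewrite cats0; exact: tweak_good.
have Hok0 : forall c, c \in ([::] : seq (seq G * seq G)) -> okC t c by [].
have Hsp0 : (t.+1 * (3 * t) + t * (t * t * (size ([::] : seq (seq G * seq G)) + t.+1)) <= size S)%N.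
  by rewrite add0n.
have [rcs2 [pool2 [Hs2 Hp2 Hg2 Hok2 Hd2]]] :=
  @chunks G t ys t.+1 Ht [::] S Hg0 HuS HnzS Hok0 I Hsp0.
rewrite /= addn0 in Hs2.
have Hu2 : uniq pool2 by move: HuS; rewrite (perm_uniq Hp2) cat_uniq => /and3P [].
have Hnz2 : all (fun x => x != 1) pool2.
  by move: HnzS; rewrite (perm_all _ Hp2) all_cat => /andP [].
have [D [Q [HpD HsQ HgD]]] := @Dphase G t (size pool2) _ _ Hg2 Hu2 Hnz2 (leq_addr _ _).
have HnzQ : all (fun x => x != 1) Q.
  by move: Hnz2; rewrite (perm_all _ HpD) all_cat => /andP [].
have HsQ' : (size Q < size rcs2)%N by rewrite Hs2; lia.
have [tr [Hm HpQ Hok]] := @assignB G rcs2 Q Hd2 HsQ' HnzQ.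
exists (flatten (map (@finT G) (rev tr)) ++ D); split.
- apply: (perm_trans (perm_cat (perm_finT (rev tr)) (perm_refl D))).
  have -> : flatten (map (@baseT G) (rev tr)) = flat (rev rcs2).
    by rewrite -Hm /flat -map_rev -map_comp.
  apply: (@perm_trans _ (flat (rev rcs2) ++ D ++ Q)).
    rewrite -catA perm_cat2l perm_catC perm_cat2l.
    apply: (perm_trans _ HpQ); rewrite map_rev.
    by apply: perm_flatten; rewrite perm_rev.
  apply: (@perm_trans _ (flat (rev rcs2) ++ pool2)); first by rewrite perm_cat2l perm_sym.
  by rewrite perm_sym; exact: Hp2.
- apply: good_tweak.
  have HX : forall Z, good t (ys ++ Z) -> good t (ys ++ Z) by [].
  have Hc : forall c, c \in rev tr ->
     [/\ (t.-1 <= size c.1.1)%N, (t.-1 <= size c.1.2)%N & (c.2 = [::] \/ good t (finT c))].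
    move=> c; rewrite mem_rev => Hc.
    have Hc1 : c.1 \in rcs2 by rewrite -Hm; apply: map_f.
    have [H1 H2 H3] := Hok2 _ Hc1.
    split; [by rewrite H1 | by rewrite H2 |].
    case: (Hok c Hc) => [->|[x [Ex [Hx1 HxB]]]]; first by left.
    right; rewrite /finT Ex /=.
    apply: good_ins => //.
    + exact: (good_prefix H3).
    + exact: (good_suffix H3).
  have := @glue_chunks G t (rev tr) ys ys HX Hc D.
  apply.
  have -> : flatten (map (@baseT G) (rev tr)) = flat (rev rcs2).
    by rewrite -Hm /flat -map_rev -map_comp.
  by rewrite catA.
Qed.
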